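(* Consider Phase-1 training with learning rate $\alpha>0$ on a fixed batch of size $N$, fix $a_\star\in(0,1]$, and let $T_\star := \min\{t : |a_t| \ge a_\star\}$. Let $q_\star := c_0/\sqrt N > 0$. Assume \[ \mathrm{sign}(a_0) = \mathrm{sign}(q_0), \qquad |q_0| \ge q_\star, \] and the stability condition $\alpha a_\star\|\widehat M\|_2 \le \frac12$. Then for all $t < T_\star$ we have $\mathrm{sign}(a_t) = \mathrm{sign}(q_t) = \mathrm{sign}(q_0)$ and $|q_t| \ge |q_0| \ge q_\star$. Consequently, \[ T_\star \le \left\lceil \frac{2(a_\star - |a_0|)_+}{\alpha q_\star}\right\rceil . \]
   Context: $\widehat M := \frac1N\sum_{s=1}^N y^{(s)}x^{(s)}x^{(s)\top}$ for samples $x^{(s)}\in\{\pm1\}^d$, $y^{(s)} = x^{(s)}_1x^{(s)}_2$. Phase-1 updates: $a_{t+1} = \mathrm{clip}_{[-1,1]}(a_t + \frac\alpha2 q_t)$, $w_{t+1} = \frac{w_t + \alpha a_t\widehat M w_t}{\|w_t + \alpha a_t\widehat M w_t\|_2}$, $q_t := w_t^\top\widehat M w_t$, with $w_0$ a unit vector. $c_0>0$ is a constant (in the paper, $c_0\in(0,\sqrt3/2)$ from the lower bound $\Pr[|q_0|\ge c_0/\sqrt N]\ge p_{PZ}(c_0)$). $(z)_+ = \max\{z,0\}$. *)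

(* Defs.v *)
From HB Require Import structures.
From mathcomp Require Import all_boot all_order all_algebra.
From mathcomp Require Import classical_sets reals.
Set Implicit Arguments. Unset Strict Implicit. Unset Printing Implicit Defensive.
Import Order.TTheory GRing.Theory Num.Theory.
Local Open Scope ring_scope.
Local Open Scope classical_set_scope.

Section Phase1.
Variable R : realType.

Definition norm2 (d : nat) (v : 'cV[R]_d) : R :=
  Num.sqrt (\sum_(i < d) v i 0 ^+ 2).

Definition opnorm2 (d : nat) (A : 'M[R]_d) : R :=
  sup [set norm2 (A *m v) | v in [set v : 'cV[R]_d | norm2 v = 1]].

Definition pm1_samples (d N : nat) (x : 'I_N -> 'cV[R]_d) : Prop :=
  forall s i, x s i 0 = 1 \/ x s i 0 = -1.

(* Labels y^(s) = x^(s)_1 x^(s)_2 (first two coordinates; needs 1 < d). *)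
Definition label (d N : nat) (hd : (1 < d)%N) (x : 'I_N -> 'cV[R]_d) (s : 'I_N) : R :=
  x s (Ordinal (ltn_trans (ltnSn 0) hd)) 0 * x s (Ordinal hd) 0.

Definition Mhat (d N : nat) (hd : (1 < d)%N) (x : 'I_N -> 'cV[R]_d) : 'M[R]_d :=
  N%:R^-1 *: \sum_(s < N) (label hd x s *: (x s *m (x s)^T)).

Definition rayq (d : nat) (M : 'M[R]_d) (w : 'cV[R]_d) : R := ((w^T *m M *m w) 0 0).

Definition clip1 (z : R) : R := Num.max (-1) (Num.min 1 z).

Definition posp (z : R) : R := Num.max z 0.

Fixpoint phase1 (d : nat) (M : 'M[R]_d) (alpha a0 : R) (w0 : 'cV[R]_d) (t : nat)
  : R * 'cV[R]_d :=
  match t with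
  | 0 => (a0, w0)
  | t'.+1 =>
      let aw := phase1 M alpha a0 w0 t' in
      let a := aw.1 in let w := aw.2 in
      let u := w + (alpha * a) *: (M *m w) in
      (clip1 (a + alpha / 2 * rayq M w), (norm2 u)^-1 *: u)
  end.

Definition a_ (d : nat) M alpha a0 (w0 : 'cV[R]_d) t := (phase1 M alpha a0 w0 t).1.
Definition w_ (d : nat) M alpha a0 (w0 : 'cV[R]_d) t := (phase1 M alpha a0 w0 t).2.
Definition q_ (d : nat) M alpha a0 (w0 : 'cV[R]_d) t := rayq M (w_ M alpha a0 w0 t).

End Phase1.

(* Main.v *)
Require Import Defs.
From HB Require Import structures.
From mathcomp Require Import all_boot all_order all_algebra.
From mathcomp Require Import classical_sets reals.
From mathcomp Require Import ring lra.
From Stdlib Require Import Classical.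
Import Order.TTheory GRing.Theory Num.Theory.
Set Implicit Arguments. Unset Strict Implicit.
Local Open Scope ring_scope.


Section Dot.
Variable R : realType.
Variable d : nat.
Implicit Types (a b c v : 'cV[R]_d) (M : 'M[R]_d).

Definition dot a b : R := (a^T *m b) 0 0.

Lemma dotDl a b c : dot (a + b) c = dot a c + dot b c.
Proof. by rewrite /dot linearD /= mulmxDl mxE. Qed.
Lemma dotDr a b c : dot c (a + b) = dot c a + dot c b.
Proof. by rewrite /dot mulmxDr mxE. Qed.
Lemma dotZl k a b : dot (k *: a) b = k * dot a b.
Proof. by rewrite /dot linearZ /= -scalemxAl mxE. Qed.
Lemma dotZr k a b : dot a (k *: b) = k * dot a b.
Proof. by rewrite /dot -scalemxAr mxE. Qed.
Lemma dotC a b : dot a b = dot b a.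
Proof.
rewrite /dot !mxE; apply: eq_bigr => i _; rewrite !mxE mulrC //.
Qed.
Lemma dotE a b : dot a b = \sum_i a i 0 * b i 0.
Proof. by rewrite /dot mxE; apply: eq_bigr => i _; rewrite mxE. Qed.
Lemma dot_ge0 a : 0 <= dot a a.
Proof. rewrite dotE; apply: sumr_ge0 => i _; exact: mulr_ge0_le0 || by rewrite -expr2 sqr_ge0. Qed.
Lemma norm2E a : norm2 a = Num.sqrt (dot a a).
Proof. by rewrite /norm2 dotE; congr Num.sqrt; apply: eq_bigr => i _; rewrite expr2. Qed.
Lemma norm2_sq a : norm2 a ^+ 2 = dot a a.
Proof. by rewrite norm2E sqr_sqrtr // dot_ge0. Qed.
Lemma dot_sym M a b : M^T = M -> dot a (M *m b) = dot (M *m a) b.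
Proof. by move=> hM; rewrite /dot trmx_mul hM mulmxA. Qed.
Lemma rayqE M w : rayq M w = dot w (M *m w).
Proof. by rewrite /rayq /dot mulmxA. Qed.

Lemma dot_abs a b : 2 * `|dot a b| <= dot a a + dot b b.
Proof.
have h1 := dot_ge0 (a + b). have h2 := dot_ge0 (a - b).
move: h1 h2; rewrite !(dotDl, dotDr) -!scaleN1r !(dotZl, dotZr) (dotC b a).
case: (ger0P (dot a b)) => _; lra.
Qed.
End Dot.



Section Op.
Variable R : realType.
Variable d : nat.
Implicit Types (a b c v : 'cV[R]_d) (M : 'M[R]_d).

Lemma norm2_ge0 v : 0 <= norm2 v.
Proof. by rewrite /norm2 sqrtr_ge0. Qed.

Lemma dot0 v : dot v v = 0 -> v = 0.
Proof.
rewrite dotE => h; apply/matrixP => i j; rewrite (ord1 j) mxE.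
have H: forall i, true -> 0 <= v i 0 * v i 0 by move=> k _; rewrite -expr2 sqr_ge0.
have := psumr_eq0P H h (i:=i) isT.
by move/eqP; rewrite mulf_eq0 orbb => /eqP.
Qed.
Lemma sq_le1 (x : R) : x * x <= 1 -> `|x| <= 1.
Proof. by case: (ger0P x) => hx; nra. Qed.

Lemma coord_le v j : v j 0 * v j 0 <= dot v v.
Proof.
rewrite dotE (bigD1 j) //= lerDl; apply: sumr_ge0 => i _.
by rewrite -expr2 sqr_ge0.
Qed.

Lemma opnorm_ub M : has_ubound [set norm2 (M *m v) | v in [set v | norm2 v = 1]].
Proof.
pose C : R := \sum_i \sum_j `|M i j|.
exists (1 + d%:R * C ^+ 2) => y [v hv <-].
have hvv : dot v v = 1 by rewrite -norm2_sq hv expr1n.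
have hvj j : `|v j 0| <= 1 by apply: sq_le1; rewrite -hvv coord_le.
have hMi i : `|(M *m v) i 0| <= C.
  rewrite mxE; apply: (le_trans (ler_norm_sum _ _ _)).
  apply: (@le_trans _ _ (\sum_j `|M i j|)).
    apply: ler_sum => j _; rewrite normrM; apply: ler_piMr => //.
  rewrite /C [X in _ <= X](bigD1 i) //=; apply: ler_wpDr => //.
  by apply: sumr_ge0 => k _; apply: sumr_ge0 => l _.
have hC : 0 <= C by apply: sumr_ge0 => i _; apply: sumr_ge0.
have hsq : dot (M *m v) (M *m v) <= d%:R * C ^+ 2.
  rewrite dotE; apply: (@le_trans _ _ (\sum_(i < d) C ^+ 2)).
    apply: ler_sum => i _; have := hMi i.
    by case: (ger0P ((M *m v) i 0)) => h1 h2; nra.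
  by rewrite sumr_const card_ord mulr_natl.
have h0 := norm2_ge0 (M *m v); have h2 := norm2_sq (M *m v).
have hB : 0 <= d%:R * C ^+ 2 by rewrite mulr_ge0 // sqr_ge0.
nra.
Qed.

Lemma opnorm_main M (w0 : 'cV[R]_d) : norm2 w0 = 1 ->
  0 <= opnorm2 M /\ forall v, dot (M *m v) (M *m v) <= opnorm2 M ^+ 2 * dot v v.
Proof.
move=> hw0.
have hub := ub_le_sup (opnorm_ub M).
have key : forall e, norm2 e = 1 -> norm2 (M *m e) <= opnorm2 M.
  by move=> e he; apply: hub; exists e.
have K0 : 0 <= opnorm2 M by apply: le_trans (key _ hw0); apply: norm2_ge0.
split => // v.
have [hv|hv] := eqVneq (dot v v) 0.
  rewrite hv mulr0 (dot0 hv) mulmx0 dotE big1 // => i _; by rewrite mxE mul0r.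
have hvp : 0 < dot v v by rewrite lt_def hv dot_ge0.
pose n := norm2 v.
have hn2 : n ^+ 2 = dot v v by rewrite norm2_sq.
have hn : 0 < n by rewrite lt_def norm2_ge0 andbT; apply/eqP => h; move: hn2; rewrite h expr0n /= => h'; move: hv; rewrite -h' eqxx.
pose e := n^-1 *: v.
have hee : dot e e = 1.
  by rewrite /e dotZl dotZr -hn2; field; rewrite gt_eqF.
have he : norm2 e = 1.
  have := norm2_sq e; rewrite hee; have := norm2_ge0 e; nra.
have hk := key _ he.
have hMe : dot (M *m e) (M *m e) = n^-2 * dot (M *m v) (M *m v).
  by rewrite /e -scalemxAr dotZl dotZr mulrA -expr2 exprVn.
have := norm2_sq (M *m e); have := norm2_ge0 (M *m e).
rewrite hMe -hn2 => h1 h2.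
have h3 : n^-2 * dot (M *m v) (M *m v) <= opnorm2 M ^+ 2 by rewrite -h2; nra.
have hinv : n^-2 * n^+2 = 1 by rewrite mulVf // expf_neq0 // gt_eqF.
nra.
Qed.

End Op.



Section Step.
Variable R : realType.
Variable d : nat.
Implicit Types (a b c v w : 'cV[R]_d) (M : 'M[R]_d).

Lemma quad_abs M (K : R) v : 0 <= K ->
  (forall v, dot (M *m v) (M *m v) <= K ^+ 2 * dot v v) ->
  `|dot v (M *m v)| <= K * dot v v.
Proof.
move=> K0 hK2; have h2 := hK2 v; have hvv := dot_ge0 v.
have [Kp|Ke] := eqVneq K 0.
  move: h2; rewrite Kp expr0n /= mul0r => h.
  have : dot (M *m v) (M *m v) = 0 by apply/eqP; rewrite eq_le h dot_ge0.
  move/dot0 => ->; rewrite dotE big1 ?normr0 ?mul0r // => i _; by rewrite mxE mulr0.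
have Kpos : 0 < K by rewrite lt_def Ke K0.
have := dot_abs (K *: v) (M *m v); rewrite dotZl dotZl dotZr normrM (ger0_norm K0).
set x := `|_|; have hx : 0 <= x by rewrite normr_ge0.
move=> h; nra.
Qed.

Lemma step M (K s : R) w :
  M^T = M -> 0 <= K ->
  (forall v, dot (M *m v) (M *m v) <= K ^+ 2 * dot v v) ->
  dot w w = 1 -> `|s| * K <= 1/2 ->
  let u := w + (s *: (M *m w)) in
  let w' := (norm2 u)^-1 *: u in
  0 < dot u u /\ dot w' w' = 1 /\ 0 <= s * (dot w' (M *m w') - dot w (M *m w)).
Proof.
move=> hM K0 hK2 hw hs u w'.
have hK v := quad_abs v K0 hK2.
pose q := dot w (M *m w).
pose m2 := dot (M *m w) (M *m w).
pose m3 := dot (M *m w) (M *m (M *m w)).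
pose v := M *m w - q *: w.
have hMw : dot (M *m w) w = q by rewrite dotC.
have hMMw : dot w (M *m (M *m w)) = m2 by rewrite dot_sym.
have hMMw' : dot (M *m (M *m w)) w = m2 by rewrite dotC.
have hm3 : dot (M *m (M *m w)) (M *m w) = m3 by rewrite dotC.
have huu : dot u u = 1 + 2 * s * q + s ^+ 2 * m2.
  rewrite /u !(dotDl, dotDr, dotZl, dotZr) hw hMw -/q -/m2; ring.
have huMu : dot u (M *m u) = q + 2 * s * m2 + s ^+ 2 * m3.
  rewrite /u mulmxDr -scalemxAr !(dotDl, dotDr, dotZl, dotZr) ?hMMw ?hm3 -/q -/m2 -/m3; ring.
have hV : dot v v = m2 - q ^+ 2.
  rewrite /v -scaleN1r !(dotDl, dotDr, dotZl, dotZr) hw hMw -/q -/m2; ring.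
have hW : dot v (M *m v) = m3 - 2 * q * m2 + q ^+ 3.
  rewrite /v -scaleN1r scalerA mulmxDr -scalemxAr !(dotDl, dotDr, dotZl, dotZr) ?hw ?hMw ?hMMw ?hMMw' ?hm3 -/q -/m2 -/m3; ring.
have hV0 : 0 <= m2 - q ^+ 2 by rewrite -hV dot_ge0.
have hq : `|q| <= K by have := hK w; rewrite hw mulr1.
have hW' := hK v; rewrite hV hW in hW'.
have hsa := normr_ge0 s.
have hsq : `|s * q| <= 1/2.
  rewrite normrM; have := normr_ge0 q; nra.
have hsW : `|s * (m3 - 2 * q * m2 + q ^+ 3)| <= 1/2 * (m2 - q ^+ 2).
  rewrite normrM; have := normr_ge0 (m3 - 2 * q * m2 + q ^+ 3); nra.
move: hsq hsW; rewrite !ler_norml => /andP[hsq1 hsq2] /andP[hsW1 hsW2].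
have hs2 : 0 <= s ^+ 2 * (m2 - q ^+ 2) by rewrite mulr_ge0 // sqr_ge0.
have uupos : 0 < dot u u by rewrite huu; nra.
split => //.
pose c := (norm2 u)^-1.
have hn2 := norm2_sq u.
have hc : c ^+ 2 * dot u u = 1.
  by rewrite /c exprVn -hn2 mulVf // expf_neq0 //; apply/eqP => h; move: uupos; rewrite -hn2 h expr0n ltxx.
have hw'w' : dot w' w' = c ^+ 2 * dot u u by rewrite /w' dotZl dotZr mulrA -expr2.
split; first by rewrite hw'w'.
have hw'M : dot w' (M *m w') = c ^+ 2 * dot u (M *m u).
  by rewrite /w' -scalemxAr dotZl dotZr mulrA -expr2.
rewrite hw'M -/q.
have key : dot u (M *m u) - q * dot u u =
  s * ((2 + s * q) * (m2 - q ^+ 2) + s * (m3 - 2 * q * m2 + q ^+ 3)).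
  rewrite huu huMu; ring.
have -> : s * (c ^+ 2 * dot u (M *m u) - q) = c ^+ 2 * (s * (dot u (M *m u) - q * dot u u)).
  by rewrite -[X in _ - X]mulr1 -hc; ring.
rewrite key mulrA; apply: mulr_ge0; first by rewrite sqr_ge0.
rewrite -expr2; apply: mulr_ge0; first by rewrite sqr_ge0.
nra.
Qed.
End Step.



Section Misc.
Variable R : realType.

Lemma clip_sg (sg z : R) : sg = 1 \/ sg = -1 -> 0 < sg * z ->
  sg * clip1 z = Num.min 1 (sg * z).
Proof.
rewrite /clip1 => [[->|->]] h; rewrite ?mul1r ?mulN1r in h *;
  rewrite !(minEle, maxEle); repeat case: ifPn; rewrite ?leNgt ?negbK; lra.
Qed.

Lemma min1_lt (y : R) : Num.min 1 y < 1 -> Num.min 1 y = y.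
Proof. by rewrite minEle; case: ifPn => //; rewrite ltxx. Qed.

Lemma sg_abs (sg y : R) : sg = 1 \/ sg = -1 -> 0 < sg * y -> `|y| = sg * y.
Proof.
case=> -> h; rewrite ?mul1r ?mulN1r in h *; first by rewrite gtr0_norm.
by rewrite ltr0_norm // -oppr_gt0.
Qed.

Lemma sg_of (sg y : R) : sg = 1 \/ sg = -1 -> 0 < sg * y -> Num.sg y = sg.
Proof.
case=> -> h; rewrite ?mul1r ?mulN1r in h *; first by rewrite gtr0_sg.
by rewrite ltr0_sg // -oppr_gt0.
Qed.

Lemma Mhat_sym d N (hd : (1 < d)%N) (x : 'I_N -> 'cV[R]_d) : (Mhat hd x)^T = Mhat hd x.
Proof.
rewrite /Mhat linearZ /= linear_sum /=; congr (_ *: _); apply: eq_bigr => s _.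
by rewrite linearZ /= trmx_mul trmxK.
Qed.
End Misc.


Unset Implicit Arguments. Set Strict Implicit.


Theorem lemma7 (R : realType) (d N : nat) (hd : (1 < d)%N) (hN : (0 < N)%N)
    (x : 'I_N -> 'cV[R]_d) (hx : pm1_samples x)
    (alpha a_star c0 a0 : R) (w0 : 'cV[R]_d)
    (halpha : 0 < alpha) (ha1 : 0 < a_star) (ha2 : a_star <= 1) (hc0 : 0 < c0)
    (hw0 : norm2 w0 = 1) :
  let M := Mhat hd x in
  let a := a_ M alpha a0 w0 in
  let q := q_ M alpha a0 w0 in
  let q_star := c0 / Num.sqrt (N%:R) in
  Num.sg a0 = Num.sg (q 0%N) ->
  q_star <= `|q 0%N| ->
  alpha * a_star * opnorm2 M <= 1 / 2 ->
  (* for all t < T_star, i.e. |a_s| < a_star for all s <= t *)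
  (forall t : nat, (forall s : nat, (s <= t)%N -> `|a s| < a_star) ->
     [/\ Num.sg (a t) = Num.sg (q 0%N), Num.sg (q t) = Num.sg (q 0%N)
       & `|q 0%N| <= `|q t| ]) /\
  (* T_star exists and T_star <= ceil(2 (a_star - |a_0|)_+ / (alpha q_star)) *)
  (exists T : nat, a_star <= `|a T| /\
     (T%:Z <= Num.ceil (2 * posp (a_star - `|a0|) / (alpha * q_star)))%R).
Proof.
move=> M a q q_star hsg hq0 hstab.
have hMs : M^T = M by apply: Mhat_sym.
have [K0 hK2] := opnorm_main M hw0.
set K := opnorm2 M in K0 hK2 hstab.
have qs0 : 0 < q_star by rewrite /q_star divr_gt0 // sqrtr_gt0 ltr0n.
pose w := w_ M alpha a0 w0.
have aS t : a t.+1 = clip1 (a t + alpha / 2 * q t) by [].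
have wS t : w t.+1 = (norm2 (w t + (alpha * a t) *: (M *m w t)))^-1 *:
   (w t + (alpha * a t) *: (M *m w t)) by [].
have qE t : q t = dot (w t) (M *m w t) by rewrite /q /q_ rayqE.
pose sg := Num.sg (q 0%N).
have q00 : q 0%N != 0 by apply/eqP => h; move: hq0; rewrite h normr0; lra.
have hsg1 : sg = 1 \/ sg = -1.
  rewrite /sg; case: (ltrgt0P (q 0%N)) => h.
  - by left; rewrite gtr0_sg.
  - by right; rewrite ltr0_sg.
  - by move: q00; rewrite h eqxx.
have sgq0 : sg * q 0%N = `|q 0%N|.
  rewrite /sg; case: (ltrgt0P (q 0%N)) => h.
  - by rewrite (gtr0_sg h) mul1r.
  - by rewrite (ltr0_sg h) mulN1r.
  - by move: q00; rewrite h eqxx.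
have a00 : a0 != 0.
  apply/eqP => h; move: hsg; rewrite h sgr0 -/sg; case: hsg1 => -> h'.
    by move: (oner_neq0 R); rewrite h' eqxx.
  by move/eqP: h'; rewrite eq_sym oppr_eq0 oner_eq0.
have sga0 : sg * a0 = `|a0|.
  rewrite /sg -hsg; case: (ltrgt0P a0) => h.
  - by rewrite (gtr0_sg h) mul1r.
  - by rewrite (ltr0_sg h) mulN1r.
  - by move: a00; rewrite h eqxx.
have P : forall t, (forall s, (s <= t)%N -> `|a s| < a_star) ->
  [/\ dot (w t) (w t) = 1, 0 < sg * a t, sg * q 0%N <= sg * q t &
      `|a0| + t%:R * (alpha * q_star / 2) <= sg * a t].
  elim=> [|t IH] H.
    split; first by rewrite -norm2_sq hw0 expr1n.
    - by rewrite /a /a_ /= sga0 normr_gt0.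
    - by [].
    - by rewrite /a /a_ /= sga0 mul0r addr0.
  have [hw hat hqt hlin] := IH (fun s hs => H s (leqW hs)).
  have Ht := H t (leqnSn t). have Ht1 := H t.+1 (leqnn _).
  have hs : `|alpha * a t| * K <= 1/2.
    rewrite normrM (gtr0_norm halpha); have := normr_ge0 (a t); nra.
  have [_ [hw' hq']] := step hMs K0 hK2 hw hs.
  rewrite -wS -!qE in hw' hq'.
  have sgq : 0 <= sg * (q t.+1 - q t).
    have hsp : 0 < sg * (alpha * a t) by rewrite mulrCA mulr_gt0.
    have hsg2 : sg * sg = 1 by case: hsg1 => ->; lra.
    have e : (sg * (alpha * a t)) * (sg * (q t.+1 - q t)) = alpha * a t * (q t.+1 - q t).
      by rewrite mulrACA hsg2 mul1r.
    by rewrite -(pmulr_rge0 _ hsp) e.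
  have hz : sg * a t + alpha / 2 * q_star <= sg * (a t + alpha / 2 * q t).
    have hqs : q_star <= sg * q t by rewrite -sgq0 in hq0; lra.
    have ha2' : 0 <= alpha / 2 by rewrite divr_ge0 // ltW.
    have hd' : 0 <= sg * q t - q_star by rewrite subr_ge0.
    have := mulr_ge0 ha2' hd' => h; nra.
  have hz0 : 0 < sg * (a t + alpha / 2 * q t).
    apply: (lt_le_trans _ hz).
    have ha2' : 0 <= alpha / 2 by rewrite divr_ge0 // ltW.
    have := mulr_ge0 ha2' (ltW qs0) => h; lra.
  have hc := clip_sg hsg1 hz0; rewrite -aS in hc.
  have hat1 : 0 < sg * a t.+1 by rewrite hc lt_min ltr01 hz0.
  have hab := sg_abs hsg1 hat1.
  have hmin : Num.min 1 (sg * (a t + alpha / 2 * q t)) < 1 by rewrite -hc -hab; lra.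
  rewrite (min1_lt hmin) in hc.
  split => //; first lra.
  rewrite hc -natr1; lra.
split.
  move=> t H; have [_ hat hqt _] := P t H.
  have hq0p : 0 < sg * q 0%N by rewrite sgq0 normr_gt0.
  have hqtp : 0 < sg * q t by lra.
  split; first exact: sg_of hsg1 hat.
  - exact: sg_of hsg1 hqtp.
  - by rewrite -sgq0 (sg_abs hsg1 hqtp).
pose r := 2 * posp (a_star - `|a0|) / (alpha * q_star).
have hp0 : 0 <= posp (a_star - `|a0|) by rewrite /posp le_max lexx orbT.
have r0 : 0 <= r.
  by rewrite /r divr_ge0 // mulr_ge0 // ltW.
have c0' : 0 <= Num.ceil r by rewrite ceil_ge0; lra.
pose K' := `|Num.ceil r|%N.
have hK'Z : K'%:Z = Num.ceil r by rewrite /K' gez0_abs.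
have hrK : r <= K'%:R by have := ceil_ge r; rewrite -hK'Z.
case: (classic (exists s, (s <= K')%N /\ a_star <= `|a s|)) => [[s [hs1 hs2]]|hne].
  by exists s; split => //; rewrite -/r -hK'Z lez_nat.
exfalso.
have H : forall s, (s <= K')%N -> `|a s| < a_star.
  move=> s hs; rewrite ltNge; apply/negP => h; apply: hne; by exists s.
have [_ haK _ hlin] := P K' H.
have := H K' (leqnn _); rewrite (sg_abs hsg1 haK) => hlt.
have hpos : a_star - `|a0| <= posp (a_star - `|a0|) by rewrite /posp le_max lexx.
have hr : r * (alpha * q_star / 2) = posp (a_star - `|a0|).
  have hm : alpha * q_star != 0 by rewrite mulf_neq0 // gt_eqF.
  rewrite /r; move: hm; move: (alpha * q_star) => m hm; field.
  by rewrite hm.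
have : r * (alpha * q_star / 2) <= K'%:R * (alpha * q_star / 2).
  by rewrite ler_wpM2r // divr_ge0 // mulr_ge0 // ltW.
lra.
Qed.
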